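(* Let $\lambda$ be a polynomial $\mathfrak{gl}_{m|n}$ weight, $a\in\{0,1,\dots,m\}$, $b\in\{0,1,\dots,n\}$, and \[\boldsymbol A=(\lambda_m+\lambda_{m+1}<\lambda_{m-1}+\lambda_{m+1}+1<\dots<\lambda_{m-a+1}+\lambda_{m+1}+a-1),\] \[\boldsymbol B=(0<\lambda_{m+1}-\lambda_{m+2}+1<\dots<\lambda_{m+1}-\lambda_{m+b}+b-1)\] (i.e. $\boldsymbol A=\{\lambda_{m-k+1}+\lambda_{m+1}+k-1\}_{k=1}^a$, $\boldsymbol B=\{\lambda_{m+1}-\lambda_{m+k}+k-1\}_{k=1}^b$). Then the dominant of the partition $\boldsymbol A\sqcup\boldsymbol B$ is: (1) if $b\le\lambda_m$: $(0<\lambda_{m+1}-\lambda_{m+2}+1<\dots<\lambda_{m+1}-\lambda_{m+b}+b-1<\lambda_m+\lambda_{m+1}<\dots<\lambda_{m-a+1}+\lambda_{m+1}+a-1)$; (2) if $\lambda_{m-j+1}<b\le\lambda_{m-j}$ for some $1\le j\le a-1$: $(0<\lambda_{m+1}-\lambda_{m+2}+1<\dots<\lambda_{m+1}-\lambda_{m+b}+b-1<\lambda_{m+1}+b<\lambda_{m+1}+b+1<\dots<\lambda_{m+1}+b+j-1<\lambda_{m-j}+\lambda_{m+1}+j<\dots<\lambda_{m-a+1}+\lambda_{m+1}+a-1)$; (3) if $\lambda_{m-a+1}<b$: $(0<\lambda_{m+1}-\lambda_{m+2}+1<\dots<\lambda_{m+1}-\lambda_{m+b}+b-1<\lambda_{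m+1}+b<\lambda_{m+1}+b+1<\dots<\lambda_{m+1}+b+a-1)$.
   Context: A polynomial $\mathfrak{gl}_{m|n}$ weight is $\lambda=(\lambda_1,\dots,\lambda_{m+n})\in\mathbb{Z}^{m+n}_{\ge0}$ with $\lambda_1\ge\dots\ge\lambda_m$, $\lambda_{m+1}\ge\dots\ge\lambda_{m+n}$, and $\lambda_{m+k}=0$ whenever $k>\lambda_m$. A partition with $r$ parts is a weakly increasing sequence $\boldsymbol a=(a_1\le\dots\le a_r)$ of nonnegative integers; a finite multiset of nonnegative integers is identified with the partition obtained by sorting it, and $\sqcup$ denotes multiset union. $\boldsymbol b$ dominates $\boldsymbol a$ (both with $r$ parts) if $b_i\ge a_i$ for all $i$. The dominant $\bar{\boldsymbol a}$ of $\boldsymbol a$ is the unique partition with $r$ distinct parts which dominates $\boldsymbol a$ and is dominated by every partition with $r$ distinct parts dominating $\boldsymbol a$. *)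

(* Defs.v *)
From mathcomp Require Import all_boot.
Set Implicit Arguments. Unset Strict Implicit. Unset Printing Implicit Defensive.

(* A gl_{m|n} weight is a function lam : nat -> nat, used at indices 1..m+n
   (lam i = lambda_i); values outside 1..m+n are irrelevant. *)
Definition polynomial_weight (m n : nat) (lam : nat -> nat) : Prop :=
  [/\ (forall i, 1 <= i -> i < m -> lam i.+1 <= lam i),
      (forall i, m + 1 <= i -> i < m + n -> lam i.+1 <= lam i) &
      (forall k, 1 <= k <= n -> lam m < k -> lam (m + k) = 0)].

Definition partition (s : seq nat) : bool := sorted leq s.
Definition distinct_partition (s : seq nat) : bool := sorted ltn s.

Definition munion (s t : seq nat) : seq nat := sort leq (s ++ t).

Definition dominates (b a : seq nat) : Prop :=
  size b = size a /\ forall i, i < size a -> nth 0 a i <= nth 0 b i.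

Definition is_dominant (a d : seq nat) : Prop :=
  [/\ distinct_partition d, dominates d a &
      forall c, distinct_partition c -> dominates c a -> dominates c d].

Definition seqA (m : nat) (lam : nat -> nat) (a : nat) : seq nat :=
  [seq lam (m - k + 1) + lam (m + 1) + (k - 1) | k <- iota 1 a].
Definition seqB (m : nat) (lam : nat -> nat) (b : nat) : seq nat :=
  [seq (lam (m + 1) - lam (m + k)) + (k - 1) | k <- iota 1 b].

(* Main.v *)
Require Import Defs.
From mathcomp Require Import all_boot zify.

Lemma count_sub_in (P Q : pred nat) (l : seq nat) :
  {in l, forall x, Q x -> P x} -> count Q l <= count P l.
Proof.
elim: l => //= x l IH H.
have H' : {in l, forall x, Q x -> P x} by move=> y Hy; apply: H; rewrite inE Hy orbT.
have := IH H'. have := H x (mem_head x l).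
case: (Q x); case: (P x) => /=; lia.
Qed.

Lemma count_iota_le n s r : count (fun k => k <= r) (iota s n) = minn n (r.+1 - s).
Proof.
elim: n s => [|n IH] s /=; first by rewrite min0n.
rewrite IH; case: (leqP s r) => H /=; lia.
Qed.

Lemma count_lb (f : nat -> nat) n r v :
  r <= n -> (forall k, 1 <= k -> k <= r -> f k <= v) ->
  r <= count (fun x => x <= v) [seq f k | k <- iota 1 n].
Proof.
move=> rn H. rewrite count_map.
apply: leq_trans (count_sub_in _ (fun k => k <= r) _ _).
  rewrite count_iota_le; lia.
move=> k; rewrite mem_iota => /andP [k1 _] kr /=; exact: H.
Qed.

Lemma count_ub (f : nat -> nat) n r v :
  (forall k, 1 <= k -> k <= n -> r < k -> v <= f k) ->
  count (fun x => x < v) [seq f k | k <- iota 1 n] <= r.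
Proof.
move=> H; rewrite count_map.
apply: leq_trans (count_sub_in (fun k => k <= r) _ _ _) _.
  move=> k; rewrite mem_iota => /andP [k1 kn] /= fk.
  rewrite leqNgt; apply/negP => rk. have := H k k1 _ rk. lia.
rewrite count_iota_le; lia.
Qed.

Lemma mono_shift (f : nat -> nat) lo hi :
  (forall i, lo <= i -> i.+1 < hi -> f i < f i.+1) ->
  forall x y, lo <= x -> x <= y -> y < hi -> f x + (y - x) <= f y.
Proof.
move=> H x y lx xy yh.
have: forall d, x + d < hi -> f x + d <= f (x + d).
  elim=> [|d IH] h; first by rewrite !addn0.
  have := IH ltac:(lia). have := H (x + d) ltac:(lia) ltac:(lia).
  rewrite !addnS; lia.
by move=> /(_ (y - x) ltac:(lia)); rewrite subnKC.
Qed.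

Lemma sorted_ltn_map_iota (g : nat -> nat) s n :
  (forall i, s <= i -> i.+1 < s + n -> g i < g i.+1) ->
  sorted ltn [seq g i | i <- iota s n].
Proof.
elim: n s => [|n IH] s H //=.
case: n IH H => [|n] IH H //=.
apply/andP; split; first by apply: H; lia.
apply: (IH s.+1) => i h1 h2; apply: H; lia.
Qed.

Lemma nth_count (P : pred nat) s i : (forall x y, x <= y -> P y -> P x) ->
  sorted leq s -> i < size s -> P (nth 0 s i) = (i < count P s).
Proof.
move=> Pd; elim: s i => [|x s IH] i //= Hs Hi.
have Hs' : sorted leq s := path_sorted Hs.
have Hall : all (leq x) s.
  by rewrite (path_sortedE leq_trans) in Hs; case/andP: Hs.
case Px: (P x).
  case: i Hi => [|i] Hi //=. by rewrite IH.
have c0 : count P s = 0.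
  apply/eqP; rewrite -leqn0 leqNgt -has_count; apply/hasPn => y ys; apply/negP => Py.
  by have := Pd x y (allP Hall y ys) Py; rewrite Px.
rewrite c0 /=. case: i Hi => [|i] Hi //=. apply/negP => Pn.
have ins : nth 0 s i \in s by apply: mem_nth.
by have := Pd x _ (allP Hall _ ins) Pn; rewrite Px.
Qed.

Lemma G X Y (g : nat -> nat) N :
  size X + size Y = N ->
  (forall i, i.+1 < N -> g i < g i.+1) ->
  (forall i, i < N -> i < count (fun x => x <= g i) (X ++ Y)) ->
  (forall i, i < N -> (0 < i /\ g i = (g i.-1).+1) \/ count (fun x => x < g i) (X ++ Y) <= i) ->
  is_dominant (munion X Y) [seq g i | i <- iota 0 N].
Proof.
move=> HN Hinc HD HM.
set s := munion X Y.
have ss : sorted leq s by apply: sort_sorted; exact: leq_total.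
have sz : size s = N by rewrite size_sort size_cat.
have cnt : forall P, count P s = count P (X ++ Y).
  by move=> P; apply/permP: P; exact: permEl (perm_sort _ _).
have nthd : forall i, i < N -> nth 0 [seq g i | i <- iota 0 N] i = g i.
  by move=> i Hi; rewrite (nth_map 0) ?size_iota // nth_iota.
have sd : size [seq g i | i <- iota 0 N] = N by rewrite size_map size_iota.
have Hsi : forall i, i < N -> nth 0 s i <= g i.
  move=> i Hi; rewrite (nth_count (fun x => x <= g i)) ?sz //.
    by rewrite cnt; apply: HD.
  by move=> x y xy; apply: leq_trans.
split.
- by apply: sorted_ltn_map_iota => i _ h; apply: Hinc.
- split; first by rewrite sd sz.
  by move=> i; rewrite sz => Hi; rewrite nthd //; apply: Hsi.
- move=> c Hc [szc Hdom]. split; first by rewrite szc sd sz.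
  rewrite sd => i Hi; rewrite nthd //.
  rewrite sz in Hdom.
  elim: i Hi => [|i IH] Hi.
    case: (HM 0 Hi) => [[] //|Hc'].
    rewrite leqNgt; apply/negP => H.
    have := nth_count (fun x => x < g 0) s 0 ltac:(move=> x y xy yl; lia) ss ltac:(lia).
    rewrite /= (leq_ltn_trans (Hdom 0 Hi) H) cnt => /esym; lia.
  case: (HM i.+1 Hi) => [[_ ->]|Hc'].
    have := IH ltac:(lia).
    have := sorted_ltn_nth ltn_trans 0 Hc.
    move=> /(_ i i.+1); rewrite !inE szc sz /= => /(_ ltac:(lia) ltac:(lia) (ltnSn i)).
    lia.
  rewrite leqNgt; apply/negP => H.
  have := nth_count (fun x => x < g i.+1) s i.+1 ltac:(move=> x y xy yl; lia) ss ltac:(lia).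
  rewrite /= (leq_ltn_trans (Hdom i.+1 Hi) H) cnt => /esym; lia.
Qed.

Lemma core (p l b a j : nat) (Af Bf g : nat -> nat) :
  (forall k, 1 <= k -> Af k < Af k.+1) ->
  (forall k, 1 <= k -> k < b -> Bf k < Bf k.+1) ->
  (forall k, Bf k <= p + (k - 1)) ->
  (forall k, l < k -> k <= b -> Bf k = p + (k - 1)) ->
  (forall k, 1 <= k -> k <= a -> p + l <= Af k) ->
  (forall k, 1 <= k -> k <= j -> Af k < p + b + (k - 1)) ->
  (forall k, j < k -> k <= a -> p + b + (k - 1) <= Af k) ->
  j <= a -> (0 < j -> l < b) -> (j = 0 -> 0 < a -> b <= l) ->
  (forall i, g i = if i < b then Bf i.+1 else if i < b + j then p + b + (i - b)
                   else Af (i - b).+1) ->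
  is_dominant (munion [seq Af k | k <- iota 1 a] [seq Bf k | k <- iota 1 b])
              [seq g i | i <- iota 0 (b + a)].
Proof.
move=> hAm hBm hBb hBz hAl hAjl hAjh hj hlb hbl hg.
have Amon : forall x y, 1 <= x -> x <= y -> Af x + (y - x) <= Af y.
  move=> x y h1 h2; apply: (mono_shift _ 1 y.+1) => // i h3 h4.
  exact: hAm.
have Bmon : forall x y, 1 <= x -> x <= y -> y <= b -> Bf x + (y - x) <= Bf y.
  move=> x y h1 h2 h3; apply: (mono_shift _ 1 b.+1) => // i h4 h5.
apply: G.
- by rewrite !size_map !size_iota addnC.
- move=> i Hi; rewrite !hg.
  case: (ltnP i b) => h1; case: (ltnP i.+1 b) => h2; try lia.
  + by apply: hBm.
  + case: (ltnP i.+1 (b + j)) => h3.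
      have := hBb i.+1; lia.
    have -> : i.+1 - b = 0 by lia.
    have := hBb i.+1; have := hAl 1 ltac:(lia) ltac:(lia); have := hbl ltac:(lia) ltac:(lia); lia.
  + case: (ltnP i (b + j)) => h3; case: (ltnP i.+1 (b + j)) => h4; try lia.
      have -> : i.+1 - b = (i - b).+1 by lia.
      have := hAjh (i - b).+2 ltac:(lia) ltac:(lia); lia.
    have -> : i.+1 - b = (i - b).+1 by lia.
    exact: hAm.
- move=> i Hi; rewrite hg count_cat.
  case: (ltnP i b) => h1.
    have := count_lb Bf b i.+1 (Bf i.+1) ltac:(lia).
    have HH : forall k, 1 <= k -> k <= i.+1 -> Bf k <= Bf i.+1.
      by move=> k h2 h3; have := Bmon k i.+1 h2 h3 h1; lia.
    move=> /(_ HH). lia.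
  have cB := count_lb Bf b b (p + b + (i - b)) (leqnn b).
  case: (ltnP i (b + j)) => h2.
    have cA := count_lb Af a ((i - b).+1) (p + b + (i - b)) ltac:(lia).
    have := cA ltac:(move=> k h3 h4; have := hAjl k h3 ltac:(lia); lia).
    have := cB ltac:(move=> k h3 h4; have := hBb k; lia).
    lia.
  have hAh := hAjh (i - b).+1 ltac:(lia) ltac:(lia).
  have cB' := count_lb Bf b b (Af (i - b).+1) (leqnn b).
  have := cB' ltac:(move=> k h3 h4; have := hBb k; lia).
  have cA := count_lb Af a ((i - b).+1) (Af (i - b).+1) ltac:(lia).
  have := cA ltac:(move=> k h3 h4; have := Amon k (i - b).+1 h3 h4; lia).
  lia.
- move=> i Hi; rewrite !hg count_cat.
  case: (ltnP i b) => h1.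
    case: (leqP i l) => h2.
      right.
      have cA := count_ub Af a 0 (Bf i.+1).
      have := cA ltac:(move=> k h3 h4 h5; have := hBb i.+1; have := hAl k h3 h4; lia).
      have cB := count_ub Bf b i (Bf i.+1).
      have := cB ltac:(move=> k h3 h4 h5; have := Bmon i.+1 k ltac:(lia) h5 h4; lia).
      lia.
    left; split; first lia.
    have e1 : (i.-1 < b) = true by lia.
    rewrite e1 prednK; last lia.
    rewrite !hBz; lia.
  case: (ltnP i (b + j)) => h2.
    left; split; first by have := hlb ltac:(lia); lia.
    case: (ltnP i.-1 b) => h3.
      have -> : i = b by lia.
      rewrite prednK; last by have := hlb ltac:(lia); lia.
      rewrite hBz; first lia. by have := hlb ltac:(lia). by [].
    rewrite (_ : i.-1 < b + j); last lia.
    lia.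
  right.
  have cA := count_ub Af a (i - b) (Af (i - b).+1).
  have := cA ltac:(move=> k h3 h4 h5; have := Amon (i - b).+1 k ltac:(lia) h5; lia).
  have := count_size (fun x => x < Af (i - b).+1) [seq Bf k | k <- iota 1 b].
  rewrite size_map size_iota.
  lia.
Qed.

Lemma general (m n : nat) (lam : nat -> nat) (a b j : nat) :
  0 < m -> polynomial_weight m n lam -> a <= m -> b <= n -> j <= a ->
  (0 < j -> lam (m - j + 1) < b) -> (j < a -> b <= lam (m - j)) ->
  is_dominant (munion (seqA m lam a) (seqB m lam b))
          (seqB m lam b
           ++ [seq lam (m + 1) + b + i | i <- iota 0 j]
           ++ [seq lam (m - k + 1) + lam (m + 1) + (k - 1) | k <- iota j.+1 (a - j)]).
Proof.
move=> m0 [H1 H2 H3] am bn ja Hj1 Hj2.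
set p := lam (m + 1).
pose Af k := lam (m - k + 1) + p + (k - 1).
pose Bf k := p - lam (m + k) + (k - 1).
pose g i := if i < b then Bf i.+1 else if i < b + j then p + b + (i - b)
                   else Af (i - b).+1.
have anti0 : forall i d, 1 <= i -> i + d <= m -> lam (i + d) <= lam i.
  move=> i; elim=> [|d IH] h1 h2; first by rewrite addn0.
  have := IH h1 ltac:(lia). have := H1 (i + d) ltac:(lia) ltac:(lia).
  rewrite addnS; lia.
have anti : forall i k, 1 <= i -> i <= k -> k <= m -> lam k <= lam i.
  move=> i k h1 h2 h3; have := anti0 i (k - i) h1; rewrite subnKC //; apply; lia.
have eA : seqA m lam a = [seq Af k | k <- iota 1 a] by [].
have eB : seqB m lam b = [seq Bf k | k <- iota 1 b] by [].
have -> : seqB m lam b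
           ++ [seq lam (m + 1) + b + i | i <- iota 0 j]
           ++ [seq lam (m - k + 1) + lam (m + 1) + (k - 1) | k <- iota j.+1 (a - j)]
        = [seq g i | i <- iota 0 (b + a)].
  apply: (@eq_from_nth _ 0).
    rewrite !size_cat !size_map !size_iota; lia.
  move=> i; rewrite !size_cat !size_map !size_iota => Hi.
  rewrite (nth_map 0) ?size_iota; last lia.
  rewrite nth_iota; last lia.
  rewrite add0n /g nth_cat size_map size_iota.
  case: (ltnP i b) => ib.
    by rewrite (nth_map 0) ?size_iota // nth_iota // add1n.
  rewrite nth_cat size_map size_iota.
  case: (ltnP (i - b) j) => ibj.
    rewrite (nth_map 0) ?size_iota // nth_iota // add0n.
    by rewrite (_ : i < b + j); last lia.
  rewrite (_ : i < b + j = false); last lia.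
  rewrite (nth_map 0) ?size_iota; last lia.
  rewrite nth_iota; last lia.
  by rewrite /Af (_ : j.+1 + (i - b - j) = (i - b).+1); last lia.
rewrite eA eB.
apply: (core p (lam m) b a j Af Bf g).
- move=> k k1 /=.
  have : lam (m - k + 1) <= lam (m - k.+1 + 1).
    case: (ltnP k m) => hk.
      rewrite (_ : m - k.+1 + 1 = m - k); last lia.
      have := anti (m - k) (m - k + 1); lia.
    by rewrite (_ : m - k.+1 + 1 = 1); [rewrite (_ : m - k + 1 = 1) | lia]; lia.
  rewrite /Af; lia.
- move=> k k1 kb; rewrite /Bf.
  have := H2 (m + k) ltac:(lia) ltac:(lia). rewrite -addnS; lia.
- move=> k; rewrite /Bf; lia.
- move=> k lk kb; rewrite /Bf H3; lia.
- move=> k k1 ka; rewrite /Af.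
  have := anti (m - k + 1) m; lia.
- move=> k k1 kj; rewrite /Af.
  have := anti (m - j + 1) (m - k + 1); have := Hj1 ltac:(lia); lia.
- move=> k jk ka; rewrite /Af.
  have := anti (m - k + 1) (m - j); have := Hj2 ltac:(lia); lia.
- exact: ja.
- move=> j0; have := Hj1 j0; have := anti (m - j + 1) m; lia.
- move=> j0 a0; have := Hj2 ltac:(lia); rewrite j0 subn0; lia.
- by move=> i.
Qed.

Theorem lemma6p3 (m n : nat) (lam : nat -> nat) (a b : nat) :
  0 < m -> 0 < n -> polynomial_weight m n lam -> a <= m -> b <= n ->
  [/\ (b <= lam m ->
        is_dominant (munion (seqA m lam a) (seqB m lam b))
                    (seqB m lam b ++ seqA m lam a)),
      (forall j, 1 <= j <= a - 1 -> lam (m - j + 1) < b <= lam (m - j) ->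
        is_dominant (munion (seqA m lam a) (seqB m lam b))
          (seqB m lam b
           ++ [seq lam (m + 1) + b + i | i <- iota 0 j]
           ++ [seq lam (m - k + 1) + lam (m + 1) + (k - 1) | k <- iota j.+1 (a - j)])) &
      (lam (m - a + 1) < b ->
        is_dominant (munion (seqA m lam a) (seqB m lam b))
          (seqB m lam b ++ [seq lam (m + 1) + b + i | i <- iota 0 a]))].
Proof.
move=> m0 n0 Hw am bn; split.
- move=> hb.
  have := @general m n lam a b 0 m0 Hw am bn (leq0n a) ltac:(lia) ltac:(rewrite subn0; lia).
  by rewrite /= subn0.
- move=> j /andP [j1 j2] /andP [h1 h2].
  apply: (@general m n lam a b j) => //; lia.
- move=> hb.
  have := @general m n lam a b a m0 Hw am bn (leqnn a) ltac:(lia) ltac:(lia).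
  by rewrite subnn /= cats0.
Qed.
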